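(* Let $G=(N,S,(u_i)_{i\in N})$ be a game with solution set $D\subseteq S$, let $m\ge1$, $\beta\ge1$ and $\alpha_1,\dots,\alpha_{m-1}\ge1$. If the utility of every player is $\beta$ varied over $D$ and, for each $i=1,\dots,m-1$, $\alpha_i$-lower dependent on the transition degree over $D$ at transition degree $i$, then $$m\text{-}\mathrm{PoTA}\ge \mathrm{PoA}\Big/\Big(\big(\textstyle\prod_{i=1}^{m-1}\alpha_i\big)\beta\Big).$$ If the utility of every player is $\beta$ varied over $D$ and, for each $i=1,\dots,m-1$, $\alpha_i$-upper dependent on the transition degree over $D$ at transition degree $i$, then $$m\text{-}\mathrm{PoTS}\le \big(\textstyle\prod_{i=1}^{m-1}\alpha_i\big)\beta\,\mathrm{PoS}.$$
   Context: For $m\ge1$, $T(D,m)$ is the set of profiles $t$ for which there is a set of at most $m$ solutions $D'\subseteq D$ such that for every player $j$ there is $d\in D'$ with $t_j=d_j$ (so $T(D,1)=D$). $\mathrm{sw}(s)=\sum_ju_j(s)$, assumed to have positive maximum over $S$; minima/maxima are read as infima/suprema if not attained. $\mathrm{PoA}=\min_D\mathrm{sw}/\max_S\mathrm{sw}$, $\mathrm{PoS}=\max_D\mathrm{sw}/\max_S\mathrm{sw}$, $m\text{-}\mathrm{PoTA}=\min_{T(D,m)}\mathrm{sw}/\max_S\mathrm{sw}$, $m\text{-}\mathrm{PoTS}=\max_{T(D,m)}\mathrm{sw}/\max_S\mathrm{sw}$. Player $j$'s utility over $A$ at transition degree $i$ is $\alpha$-lower dependent on the transition degree if $\min_{s\in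 T(A,i+1)}u_j(s)\ge\min_{t\in T(A,i)}u_j(t)/\alpha$, and $\alpha$-upper dependent on the transition degree if $\max_{s\in T(A,i+1)}u_j(s)\le\alpha\max_{t\in T(A,i)}u_j(t)$. Player $j$'s utility is $\beta$ varied over $A$ if for all $s,t\in A$, $\mathrm{sw}(s)\ge\mathrm{sw}(t)\Rightarrow u_j(s)\ge u_j(t)/\beta$. *)

(* Defs.v *)
From Stdlib Require Lists.List.
From HB Require Import structures.
From mathcomp Require Import all_boot all_order all_algebra.
From mathcomp Require Import all_classical all_reals ereal.
Set Implicit Arguments. Unset Strict Implicit. Unset Printing Implicit Defensive.
Import Order.TTheory GRing.Theory Num.Theory.
Local Open Scope classical_set_scope.
Local Open Scope ring_scope.

Section Game.
Variables (R : realType) (N : finType) (A : N -> Type).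

Definition profile := forall j : N, A j.

Definition sw (u : N -> profile -> R) (s : profile) : R := \sum_(j : N) u j s.

Definition transition (D : set profile) (m : nat) : set profile :=
  [set t | exists D' : seq profile,
      (size D' <= m)%N /\ (forall d, Stdlib.Lists.List.In d D' -> D d) /\
      (forall j : N, exists d, Stdlib.Lists.List.In d D' /\ t j = d j)].

Definition einf (X : set profile) (f : profile -> R) : \bar R :=
  ereal_inf [set (f s)%:E | s in X].
Definition esup (X : set profile) (f : profile -> R) : \bar R :=
  ereal_sup [set (f s)%:E | s in X].

(* optimum: max_S sw (a supremum if not attained) *)
Definition opt (u : N -> profile -> R) : \bar R := esup setT (sw u).

Definition ratio (u : N -> profile -> R) (x : \bar R) : \bar R :=
  (x * ((fine (opt u))^-1)%:E)%E.

Definition PoA (u : N -> profile -> R) (D : set profile) : \bar R :=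
  ratio u (einf D (sw u)).
Definition PoS (u : N -> profile -> R) (D : set profile) : \bar R :=
  ratio u (esup D (sw u)).
Definition PoTA (u : N -> profile -> R) (D : set profile) (m : nat) : \bar R :=
  ratio u (einf (transition D m) (sw u)).
Definition PoTS (u : N -> profile -> R) (D : set profile) (m : nat) : \bar R :=
  ratio u (esup (transition D m) (sw u)).

Definition lower_dependent (X : set profile) (uj : profile -> R) (i : nat) (alpha : R) :=
  (einf (transition X i.+1) uj >= einf (transition X i) uj * (alpha^-1)%:E)%E.

Definition upper_dependent (X : set profile) (uj : profile -> R) (i : nat) (alpha : R) :=
  (esup (transition X i.+1) uj <= alpha%:E * esup (transition X i) uj)%E.

Definition varied (u : N -> profile -> R) (X : set profile) (uj : profile -> R) (beta : R) :=
  forall s t, X s -> X t -> sw u s >= sw u t -> uj s >= uj t / beta.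

End Game.

(* Main.v *)
Require Import Defs.
From HB Require Import structures.
From mathcomp Require Import all_boot all_order all_algebra.
From mathcomp Require Import all_classical all_reals ereal.
Import Order.TTheory GRing.Theory Num.Theory.
Local Open Scope classical_set_scope.
Local Open Scope ring_scope.

Lemma einf_le (R : realType) (N : finType) (A : N -> Type) (X : set (profile A))
  (f : profile A -> R) s : X s -> (einf X f <= (f s)%:E)%E.
Proof. by move=> Xs; apply: ereal_inf_lbound; exists s. Qed.

Lemma le_einf (R : realType) (N : finType) (A : N -> Type) (X : set (profile A))
  (f : profile A -> R) x : (forall s, X s -> x <= (f s)%:E)%E -> (x <= einf X f)%E.
Proof. by move=> H; apply/ereal_infP => _ [s Xs <-]; apply: H. Qed.

Lemma esup_ge (R : realType) (N : finType) (A : N -> Type) (X : set (profile A))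
  (f : profile A -> R) s : X s -> ((f s)%:E <= esup X f)%E.
Proof. by move=> Xs; apply: ereal_sup_ubound; exists s. Qed.

Lemma ge_esup (R : realType) (N : finType) (A : N -> Type) (X : set (profile A))
  (f : profile A -> R) x : (forall s, X s -> (f s)%:E <= x)%E -> (esup X f <= x)%E.
Proof. by move=> H; apply/ereal_supP => _ [s Xs <-]; apply: H. Qed.

Lemma einf_lt (R : realType) (N : finType) (A : N -> Type) (X : set (profile A))
  (f : profile A -> R) r : (einf X f < r%:E)%E -> exists2 s, X s & f s < r.
Proof. by move=> /ereal_inf_lt[_ [s Xs <-]]; rewrite lte_fin => H; exists s. Qed.

Lemma esup_gt (R : realType) (N : finType) (A : N -> Type) (X : set (profile A))
  (f : profile A -> R) r : (r%:E < esup X f)%E -> exists2 s, X s & r < f s.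
Proof. by move=> /ereal_sup_gt[_ [s Xs <-]]; rewrite lte_fin => H; exists s. Qed.

Lemma T1_sub (N : finType) (A : N -> Type) (j0 : N) (D : set (profile A)) t :
  transition D 1 t -> D t.
Proof.
case=> [[|d [|d2 l]]] [] //= _ [HD Hc].
- by case: (Hc j0) => d [].
- have -> : t = d.
    apply: functional_extensionality_dep => j.
    by case: (Hc j) => d' [[->|[]] ->].
  by apply: HD; left.
Qed.

Lemma T_ne (N : finType) (A : N -> Type) (j0 : N) (D : set (profile A)) m t :
  transition D m t -> exists d, D d.
Proof. by case=> D' [_ [HD Hc]]; case: (Hc j0) => d [/HD Dd _]; exists d. Qed.

Lemma N_inh (R : realType) (N : finType) (A : N -> Type) (u : N -> profile A -> R) :
  (0 < opt u)%E -> exists j0 : N, True.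
Proof.
case: (pickP (@predT N)) => [j0 _|H]; first by exists j0.
have Hs : forall s, sw u s = 0 by move=> s; rewrite /sw big_pred0.
have : (opt u <= 0)%E by apply: ge_esup => s _; rewrite Hs.
by rewrite leNgt => /negP.
Qed.

Lemma chain_lower (R : realType) (N : finType) (A : N -> Type) (D : set (profile A))
  (uj : profile A -> R) (m : nat) (alpha : nat -> R) :
  (forall i, (1 <= i < m)%N -> 1 <= alpha i) ->
  (forall i, (1 <= i < m)%N -> lower_dependent D uj i (alpha i)) ->
  forall k, (1 <= k <= m)%N ->
  (einf (transition D 1) uj * ((\prod_(1 <= i < k) alpha i)^-1)%:E <= einf (transition D k) uj)%E.
Proof.
move=> Ha Hl; elim=> [//|k IH] /andP[_ Hk].
case: k IH Hk => [_ _|k IH Hk]; first by rewrite big_geq // invr1 mule1.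
rewrite big_nat_recr //= invfM EFinM muleA.
have Hk' : (1 <= k.+1 < m)%N by [].
apply: le_trans (Hl _ Hk').
apply: lee_wpmul2r; first by rewrite lee_fin invr_ge0 (le_trans ler01 (Ha _ Hk')).
by apply: IH; rewrite /= ltnW.
Qed.

Lemma chain_upper (R : realType) (N : finType) (A : N -> Type) (D : set (profile A))
  (uj : profile A -> R) (m : nat) (alpha : nat -> R) :
  (forall i, (1 <= i < m)%N -> 1 <= alpha i) ->
  (forall i, (1 <= i < m)%N -> upper_dependent D uj i (alpha i)) ->
  forall k, (1 <= k <= m)%N ->
  (esup (transition D k) uj <= (\prod_(1 <= i < k) alpha i)%:E * esup (transition D 1) uj)%E.
Proof.
move=> Ha Hl; elim=> [//|k IH] /andP[_ Hk].
case: k IH Hk => [_ _|k IH Hk]; first by rewrite big_geq // mul1e.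
rewrite big_nat_recr //= mulrC EFinM -muleA.
have Hk' : (1 <= k.+1 < m)%N by [].
apply: le_trans (Hl _ Hk') _.
apply: lee_wpmul2l; first by rewrite lee_fin (le_trans ler01 (Ha _ Hk')).
by apply: IH; rewrite /= ltnW.
Qed.

Lemma prod_gt0 (R : realType) (m : nat) (alpha : nat -> R) :
  (forall i, (1 <= i < m)%N -> 1 <= alpha i) -> 0 < \prod_(1 <= i < m) alpha i.
Proof.
move=> Ha; rewrite big_seq; apply: prodr_gt0 => i; rewrite mem_index_iota => Hi.
exact: lt_le_trans ltr01 (Ha _ Hi).
Qed.

Lemma key_lower (R : realType) (N : finType) (A : N -> Type) (u : N -> profile A -> R)
  (D : set (profile A)) (beta : R) (j0 : N) d0 (l : R) :
  D d0 -> (forall d, D d -> l <= sw u d) -> 0 < beta ->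
  (forall j, varied u D (u j) beta) ->
  exists m : N -> R, (forall j, (m j)%:E = einf D (u j)) /\ l / beta <= \sum_j m j.
Proof.
move=> Dd0 Hl b0 Hv.
have fam : forall f : N -> profile A, (forall j, D (f j)) -> l / beta <= \sum_j u j (f j).
  move=> f Hf.
  have [i _ Hi] := @arg_minP _ _ _ j0 xpredT (fun j => sw u (f j)) isT.
  apply: (@le_trans _ _ (sw u (f i) / beta)).
    by apply: ler_wpM2r; [rewrite invr_ge0 ltW | exact: Hl].
  rewrite /sw mulr_suml; apply: ler_sum => j _.
  exact: Hv j (f j) (f i) (Hf j) (Hf i) (Hi j isT).
have hb : forall j d, D d -> l / beta - \sum_(k | k != j) u k d0 <= u j d.
  move=> j d Dd; rewrite lerBlDr.
  have := fam (fun k => if k == j then d else d0) _.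
  rewrite (bigD1 j) //= eqxx (eq_bigr (fun k => u k d0)); last by move=> k /negPf ->.
  by apply; move=> k; case: (k == j).
have : forall j, exists r : R, r%:E = einf D (u j).
  move=> j; case E: (einf D (u j)) => [r| |]; first by exists r.
  - by have := @einf_le _ _ _ _ (u j) _ Dd0; rewrite E.
  - have : ((l / beta - \sum_(k | k != j) u k d0)%:E <= einf D (u j))%E.
      by apply: le_einf => s Ds; rewrite lee_fin; exact: hb.
    by rewrite E.
case/choice => m Hm; exists m; split => //.
apply/ler_addgt0Pr => e e0.
have cN : (0 < #|N|)%N by apply/card_gt0P; exists j0.
set n : R := #|N|%:R.
have n0 : 0 < n by rewrite ltr0n.
have : forall j, exists d, D d /\ u j d < m j + e / n.
  move=> j; have [d Dd H] : exists2 d, D d & u j d < m j + e / n.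
    apply: einf_lt; rewrite -Hm lte_fin ltrDl; exact: divr_gt0.
  by exists d.
case/choice => f Hf.
apply: le_trans (fam f (fun j => (Hf j).1)) _.
apply: le_trans (_ : \sum_j (m j + e / n) <= _).
  by apply: ler_sum => j _; apply: ltW; exact: (Hf j).2.
rewrite big_split /= sumr_const -/n.
by rewrite -mulr_natr divfK // gt_eqF.
Qed.

Lemma key_upper (R : realType) (N : finType) (A : N -> Type) (u : N -> profile A -> R)
  (D : set (profile A)) (beta : R) (j0 : N) d0 (U : R) :
  D d0 -> (forall d, D d -> sw u d <= U) -> 0 < beta ->
  (forall j, varied u D (u j) beta) ->
  exists m : N -> R, (forall j, (m j)%:E = esup D (u j)) /\ \sum_j m j <= beta * U.
Proof.
move=> Dd0 Hl b0 Hv.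
have fam : forall f : N -> profile A, (forall j, D (f j)) -> \sum_j u j (f j) <= beta * U.
  move=> f Hf.
  have [i _ Hi] := @arg_maxP _ _ _ j0 xpredT (fun j => sw u (f j)) isT.
  apply: (@le_trans _ _ (beta * sw u (f i))); last first.
    by apply: ler_wpM2l; [rewrite ltW | exact: Hl].
  rewrite /sw mulr_sumr; apply: ler_sum => j _.
  have := Hv j (f i) (f j) (Hf i) (Hf j) (Hi j isT).
  by rewrite ler_pdivrMr // mulrC.
have hb : forall j d, D d -> u j d <= beta * U - \sum_(k | k != j) u k d0.
  move=> j d Dd; rewrite lerBrDr.
  have := fam (fun k => if k == j then d else d0) _.
  rewrite (bigD1 j) //= eqxx (eq_bigr (fun k => u k d0)); last by move=> k /negPf ->.
  by apply; move=> k; case: (k == j).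
have : forall j, exists r : R, r%:E = esup D (u j).
  move=> j; case E: (esup D (u j)) => [r| |]; first by exists r.
  - have : (esup D (u j) <= (beta * U - \sum_(k | k != j) u k d0)%:E)%E.
      by apply: ge_esup => s Ds; rewrite lee_fin; exact: hb.
    by rewrite E.
  - by have := @esup_ge _ _ _ _ (u j) _ Dd0; rewrite E.
case/choice => m Hm; exists m; split => //.
apply/ler_addgt0Pr => e e0.
have cN : (0 < #|N|)%N by apply/card_gt0P; exists j0.
set n : R := #|N|%:R.
have n0 : 0 < n by rewrite ltr0n.
have : forall j, exists d, D d /\ m j - e / n < u j d.
  move=> j; have [d Dd H] : exists2 d, D d & m j - e / n < u j d.
    apply: esup_gt; rewrite -Hm lte_fin gtrDl oppr_lt0; exact: divr_gt0.
  by exists d.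
case/choice => f Hf.
have := fam f (fun j => (Hf j).1).
have : \sum_j (m j - e / n) <= \sum_j u j (f j).
  by apply: ler_sum => j _; apply: ltW; exact: (Hf j).2.
move=> H1 H2; have := le_trans H1 H2.
rewrite big_split /= sumr_const -/n.
by rewrite mulNrn -mulr_natr divfK ?gt_eqF // lerBlDr.
Qed.
Arguments N_inh {R N A u}.
Arguments key_lower {R N A u D beta} j0 {d0 l}.
Arguments key_upper {R N A u D beta} j0 {d0 U}.
Arguments T_ne {N A} j0 {D m t}.
Arguments T1_sub {N A} j0 {D t}.
Arguments prod_gt0 {R m alpha}.
Arguments le_einf {R N A X f x}.
Arguments ge_esup {R N A X f x}.

Theorem proposition2 (R : realType) (N : finType) (A : N -> Type)
    (u : N -> profile A -> R) (D : set (profile A))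
    (m : nat) (beta : R) (alpha : nat -> R) :
  (0 < opt u)%E -> (opt u < +oo)%E ->
  (1 <= m)%N -> 1 <= beta ->
  (forall i, (1 <= i < m)%N -> 1 <= alpha i) ->
  (forall j, varied u D (u j) beta) ->
  ((forall i, (1 <= i < m)%N -> forall j, lower_dependent D (u j) i (alpha i)) ->
     (PoA u D * (((\prod_(1 <= i < m) alpha i) * beta)^-1)%:E <= PoTA u D m)%E)
  /\
  ((forall i, (1 <= i < m)%N -> forall j, upper_dependent D (u j) i (alpha i)) ->
     (PoTS u D m <= ((\prod_(1 <= i < m) alpha i) * beta)%:E * PoS u D)%E).
Proof.
move=> Hopt Hoptf Hm Hb Ha Hv.
have [j0 _] := N_inh Hopt.
have b0 : 0 < beta := lt_le_trans ltr01 Hb.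
have P0 : 0 < \prod_(1 <= i < m) alpha i := prod_gt0 Ha.
set P := \prod_(1 <= i < m) alpha i in P0 *.
have O0 : (0 <= ((fine (opt u))^-1)%:E)%E by rewrite lee_fin invr_ge0 fine_ge0 // ltW.
have Hmm : (1 <= m <= m)%N by rewrite Hm leqnn.
split.
- move=> Hl.
  rewrite /PoA /PoTA /ratio muleAC; apply: lee_wpmul2r => //.
  apply: le_einf => t Tt.
  have [d0 Dd0] := T_ne j0 Tt.
  case E: (einf D (sw u)) => [l| |].
  + have Hl' : forall d, D d -> l <= sw u d.
      by move=> d Dd; rewrite -lee_fin -E einf_le.
    have [mm [Hmm' Hsum]] := key_lower j0 Dd0 Hl' b0 Hv.
    have Hj : forall j, mm j / P <= u j t.
      move=> j; rewrite -lee_fin.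
      apply: le_trans (@einf_le _ _ _ _ (u j) _ Tt).
      apply: le_trans (@chain_lower _ _ _ D (u j) m alpha Ha (fun i Hi => Hl i Hi j) m Hmm).
      rewrite EFinM Hmm'; apply: lee_wpmul2r; first by rewrite lee_fin invr_ge0 ltW.
      by apply: le_einf => s Ts; apply: einf_le; apply: (T1_sub j0 Ts).
    rewrite -EFinM lee_fin /sw.
    apply: le_trans (ler_sum _ (fun j _ => Hj j)).
    rewrite -mulr_suml.
    have : l / beta / P <= (\sum_j mm j) / P by apply: ler_wpM2r => //; rewrite invr_ge0 ltW.
    by rewrite invfM mulrA mulrAC.
  + by have := @einf_le _ _ _ _ (sw u) _ Dd0; rewrite E.
  + by rewrite gt0_mulNye ?leNye // lte_fin invr_gt0 mulr_gt0.
- move=> Hu.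
  rewrite /PoTS /PoS /ratio muleA; apply: lee_wpmul2r => //.
  apply: ge_esup => t Tt.
  have [d0 Dd0] := T_ne j0 Tt.
  case E: (esup D (sw u)) => [U| |].
  + have HU : forall d, D d -> sw u d <= U.
      by move=> d Dd; rewrite -lee_fin -E esup_ge.
    have [mm [Hmm' Hsum]] := key_upper j0 Dd0 HU b0 Hv.
    have Hj : forall j, u j t <= P * mm j.
      move=> j; rewrite -lee_fin.
      apply: le_trans (@esup_ge _ _ _ _ (u j) _ Tt) _.
      apply: le_trans (@chain_upper _ _ _ D (u j) m alpha Ha (fun i Hi => Hu i Hi j) m Hmm) _.
      rewrite EFinM Hmm'; apply: lee_wpmul2l; first by rewrite lee_fin ltW.
      by apply: ge_esup => s Ts; apply: esup_ge; apply: (T1_sub j0 Ts).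
    rewrite -EFinM lee_fin /sw.
    apply: le_trans (ler_sum _ (fun j _ => Hj j)) _.
    rewrite -mulr_sumr -mulrA.
    by apply: ler_wpM2l => //; rewrite ltW.
  + by rewrite gt0_muley ?leey // lte_fin mulr_gt0.
  + by have := @esup_ge _ _ _ _ (sw u) _ Dd0; rewrite E.
Qed.
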